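(* Let $K$ be a semifield. Let $P$ be a polygon with vertex set $V$ and a non-empty dissection $D$, and let $d=\{\zeta,\eta\}\in D$ be such that $D = \{d\}\cup D_2$ where $D_2$ is a dissection of the subpolygon $P_2$ with vertex set $V_2 = \{\varepsilon \in V : \eta \le \varepsilon \le \zeta\}$. If $f : \operatorname{diag}(P) \to K$ satisfies the $T$-path formula with respect to $D$, then $f|_{\operatorname{diag}(P_2)}$ satisfies the $T$-path formula with respect to $D_2$.
   Context: A semifield is a set $K$ with binary operations $+,\cdot$ such that $+$ is associative and commutative, $(K,\cdot)$ is a commutative group, and $\cdot$ distributes over $+$. A polygon is a finite set of at least three vertices with a cyclic order, pictured as a convex polygon in the plane with vertices anticlockwise. ''$a\le\varepsilon\le b$'' means $\varepsilon$ lies on the cyclic interval from $a$ to $b$ in the positive direction, endpoints included. A subpolygon is a subset of at least three vertices with induced cyclic order. A diagonal is a two-element subset of the vertex set (edges included); $\operatorname{diag}(Q)$ denotes the set of diagonals of $Q$; non-edges are internal. Diagonals cross if they consist of four distinct vertices $\alpha,\beta,\gamma,\delta$ appearing cyclically as $\alpha,\gamma,\beta,\delta$ or $\alpha,\delta,\beta,\gamma$. A dissection is a set of pairwise non-crossing internal diagonals. For a dissection $D$ of a polygon $Q$ and vertices $\pi_1\neq\pi_p$, a $T$-path from $\pi_1$ to $\pi_p$ is a tuple $(\pi_1,\dots,\pi_p)$ of vertices of $Q$ with: (i) $\{\pi_1,\pi_2\},\dots,\{\pi_{p-1},\pi_p\}$ pairwise different diagonals; (ii) no $\{\pi_i,\pi_{i+1}\}$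 crosses a diagonal of $D$; (iii) each $\{\pi_{2j},\pi_{2j+1}\}$ lies in $D$, and these cross the segment $\{\pi_1,\pi_p\}$ at pairwise different points progressing monotonically from $\pi_1$ to $\pi_p$. $\mathcal{T}_{Q,D}(\alpha,\beta)$ is the set of these. With $f(\alpha,\beta):=f(\{\alpha,\beta\})$, $f(\pi) := \prod_{i\text{ odd}} f(\pi_i,\pi_{i+1}) / \prod_{j\text{ even}} f(\pi_j,\pi_{j+1})$. A map $f:\operatorname{diag}(Q)\to K$ satisfies the $T$-path formula with respect to $D$ if $f(\alpha,\beta) = \sum_{\pi\in\mathcal{T}_{Q,D}(\alpha,\beta)} f(\pi)$ for all vertices $\alpha\neq\beta$ of $Q$. *)

(* Defs.v *)
From HB Require Import structures.
From mathcomp Require Import all_boot.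

Set Implicit Arguments.
Unset Strict Implicit.
Unset Printing Implicit Defensive.

Record semifield := Semifield {
  sf_car :> Type;
  sf_add : sf_car -> sf_car -> sf_car;
  sf_mul : sf_car -> sf_car -> sf_car;
  sf_one : sf_car;
  sf_inv : sf_car -> sf_car;
  sf_addA : associative sf_add;
  sf_addC : commutative sf_add;
  sf_mulA : associative sf_mul;
  sf_mulC : commutative sf_mul;
  sf_mul1 : left_id sf_one sf_mul;
  sf_mulV : forall x, sf_mul x (sf_inv x) = sf_one;
  sf_mulDl : left_distributive sf_mul sf_add
}.

(* Sum of a finite family in a semifield: only defined (Some) on a    *)
(* nonempty list; the empty sum does not exist (no zero).            *)
Definition sf_osum (K : semifield) (s : seq K) : option K :=
  match s with
  | [::] => None
  | x :: s' => Some (foldr (@sf_add K) x s')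
  end.

Definition sf_prod (K : semifield) (s : seq K) : K :=
  foldr (@sf_mul K) (@sf_one K) s.

Section Polygon.
Variable n : nat.
(* Vertices are 'I_n, with the cyclic (anticlockwise) order 0,1,...,n-1. *)
(* A polygon is a subset Q : {set 'I_n} (with >= 3 elements) carrying  *)
(* the induced cyclic order.                                           *)

Definition cyc_le (a e b : 'I_n) : bool :=
  if (a <= b)%N then (a <= e <= b)%N else (a <= e)%N || (e <= b)%N.

Definition cyc_lt (a e b : 'I_n) : bool :=
  [&& cyc_le a e b, e != a & e != b].

Definition cross (d1 d2 : {set 'I_n}) : bool :=
  [exists a, exists b, exists c, exists e,
    [&& d1 == [set a; b], d2 == [set c; e], uniq [:: a; b; c; e],
        cyc_lt a c b & cyc_lt b e a]].

(* diagonal of Q: two-element subset of Q (edges included) *)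
Definition is_diag (Q : {set 'I_n}) (d : {set 'I_n}) : bool :=
  (d \subset Q) && (#|d| == 2).

Definition is_edge (Q : {set 'I_n}) (d : {set 'I_n}) : bool :=
  [exists a, exists b,
    [&& d == [set a; b], a != b & [forall e, (e \in Q) ==> ~~ cyc_lt a e b]]].

Definition internal (Q d : {set 'I_n}) : bool := is_diag Q d && ~~ is_edge Q d.

Definition dissection (Q : {set 'I_n}) (D : {set {set 'I_n}}) : bool :=
  [forall d in D, internal Q d] && [forall d1 in D, forall d2 in D, ~~ cross d1 d2].

Definition steps (p : seq 'I_n) : seq {set 'I_n} :=
  [seq [set x.1; x.2] | x <- zip p (behead p)].

(* For diagonals d, d' crossing the segment {a,b}: d' lies on the b-side *)
(* of d, i.e. the crossing point of d' with the segment from a to b     *)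
(* comes no earlier than the one of d.                                   *)
Definition before (a b : 'I_n) (d d' : {set 'I_n}) : bool :=
  [exists x, exists y,
    [&& d == [set x; y], cyc_lt a x b, cyc_lt b y a &
        d' \subset [set e | cyc_le x e y]]].

(* The D-steps: {p_{2j}, p_{2j+1}} (1-indexed), i.e. odd 0-indexed steps *)
Definition even_steps (p : seq 'I_n) : seq {set 'I_n} :=
  [seq nth set0 (steps p) k | k <- iota 0 (size (steps p)) & odd k].
Definition odd_steps (p : seq 'I_n) : seq {set 'I_n} :=
  [seq nth set0 (steps p) k | k <- iota 0 (size (steps p)) & ~~ odd k].

Definition tpath (Q : {set 'I_n}) (D : {set {set 'I_n}}) (a b : 'I_n)
    (p : seq 'I_n) : bool :=
  [&& p == a :: behead p, last a p == b, a != b,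
      all (fun v => v \in Q) p,
      all (is_diag Q) (steps p), uniq (steps p),
      all (fun s => [forall e in D, ~~ cross s e]) (steps p),
      all (fun s => s \in D) (even_steps p),
      all (fun s => cross s [set a; b]) (even_steps p) &
      pairwise (fun s s' => (s != s') && before a b s s') (even_steps p)].

Definition tweight (K : semifield) (f : {set 'I_n} -> K) (p : seq 'I_n) : K :=
  sf_mul (sf_prod [seq f s | s <- odd_steps p])
         (sf_inv (sf_prod [seq f s | s <- even_steps p])).

Definition tpath_formula (K : semifield) (Q : {set 'I_n})
    (D : {set {set 'I_n}}) (f : {set 'I_n} -> K) : Prop :=
  forall a b : 'I_n, a \in Q -> b \in Q -> a != b ->
    exists2 s : seq (seq 'I_n), uniq s &
      (forall p, p \in s = tpath Q D a b p) /\
      sf_osum [seq tweight f p | p <- s] = Some (f [set a; b]).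

Definition arc_set (eta zeta : 'I_n) : {set 'I_n} :=
  [set e | cyc_le eta e zeta].

End Polygon.

(* Main.v *)
Require Import Defs.
From mathcomp Require Import all_boot.
From mathcomp Require Import zify.

Set Implicit Arguments.
Unset Strict Implicit.
Section S.
Variable n : nat.
Implicit Types p : seq 'I_n.

Lemma steps_cons2 (x y : 'I_n) r : steps (x :: y :: r) = [set x; y] :: steps (y :: r).
Proof. by []. Qed.

Lemma even_steps_cons3 (x0 x1 x2 : 'I_n) r :
  even_steps [:: x0, x1, x2 & r] = [set x1; x2] :: even_steps (x2 :: r).
Proof.
rewrite /even_steps steps_cons2 steps_cons2 /=.
idtac.
idtac.
congr (_ :: _).
rewrite -[iota 2 _]/(iota (2 + 0) _) iotaDl filter_map -map_comp.
rewrite (@eq_filter _ _ odd) //.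
by move=> k /=; rewrite negbK add0n.
Qed.

Lemma even_steps_small (x y : 'I_n) : even_steps [:: x] = [::] /\ even_steps [:: x; y] = [::].
Proof. by []. Qed.

Lemma vert_aux k : forall (q : seq 'I_n) a x, size q <= k -> x \in a :: q ->
  [\/ x = a, x = last a q | exists2 s, s \in even_steps (a :: q) & x \in s].
Proof.
elim: k => [|k IH] [|y [|z r]] a x //=.
- by rewrite inE => _ /eqP; constructor 1.
- by rewrite inE => _ /eqP; constructor 1.
- by rewrite !inE => _ /orP[] /eqP ->; [constructor 1|constructor 2].
- move=> hs; rewrite in_cons => /orP[/eqP->|]; first by constructor 1.
  rewrite in_cons => /orP[/eqP->|hx].
    by constructor 3; exists [set y; z]; rewrite ?even_steps_cons3 ?inE ?eqxx //=.
  have [->|->|[s hs1 hs2]] := IH r z x (ltnW hs) hx.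
  + by constructor 3; exists [set y; z]; rewrite ?even_steps_cons3 ?inE ?eqxx ?orbT.
  + by constructor 2.
  + by constructor 3; exists s; rewrite // even_steps_cons3 inE hs1 orbT.
Qed.

Lemma vert (q : seq 'I_n) a x : x \in a :: q ->
  [\/ x = a, x = last a q | exists2 s, s \in even_steps (a :: q) & x \in s].
Proof. exact: (@vert_aux (size q)). Qed.

Lemma steps_mem p s : s \in steps p -> exists u, exists v, [/\ s = [set u; v], u \in p & v \in p].
Proof.
elim: p => [|x [|y r] IH] //=.
rewrite inE => /orP[/eqP->|hs].
  by exists x, y; rewrite !inE !eqxx ?orbT.
have [u [v [-> hu hv]]] := IH hs.
by exists u, v; split => //; rewrite inE ?hu ?hv orbT.
Qed.

Lemma even_in_steps p s : s \in even_steps p -> s \in steps p.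
Proof.
case/mapP=> k; rewrite mem_filter mem_iota => /andP[_ /andP[_ hk]] ->.
by apply: mem_nth; rewrite add0n in hk.
Qed.

Lemma arith1 (eta zeta x y : 'I_n) : cyc_le eta x zeta -> cyc_le eta y zeta ->
  cyc_lt x zeta y -> cyc_lt y eta x -> False.
Proof.
rewrite /cyc_lt /cyc_le -!val_eqE /=.
repeat case: ifP => ?; lia.
Qed.

Lemma arith2 (eta zeta c : 'I_n) : cyc_le eta c zeta -> cyc_lt zeta c eta -> False.
Proof.
rewrite /cyc_lt /cyc_le -!val_eqE /=.
repeat case: ifP => ?; lia.
Qed.

Lemma arith3 (a c : 'I_n) : cyc_lt a c a -> False.
Proof.
rewrite /cyc_lt /cyc_le -!val_eqE /=.
repeat case: ifP => ?; lia.
Qed.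

Lemma in_arc (eta zeta x : 'I_n) : (x \in arc_set eta zeta) = cyc_le eta x zeta.
Proof. by rewrite inE. Qed.

Lemma zeta_in (eta zeta : 'I_n) : zeta \in arc_set eta zeta.
Proof. rewrite in_arc /cyc_le; case: ifP => H; rewrite ?leqnn ?orbT ?andbT //; lia. Qed.
Lemma eta_in (eta zeta : 'I_n) : eta \in arc_set eta zeta.
Proof. rewrite in_arc /cyc_le; case: ifP => H; rewrite ?leqnn ?orbT ?andbT //; lia. Qed.

Lemma nocross1 (eta zeta u v : 'I_n) : u \in arc_set eta zeta -> v \in arc_set eta zeta ->
  ~~ cross [set u; v] [set zeta; eta].
Proof.
move=> hu hv; apply/negP.
case/existsP=> x /existsP[y /existsP[c /existsP[e /and5P[h1 h2 h3 h4 h5]]]].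
have hx : x \in arc_set eta zeta.
  have : x \in [set u; v] by rewrite (eqP h1) set21.
  by case/set2P=> ->.
have hy : y \in arc_set eta zeta.
  have : y \in [set u; v] by rewrite (eqP h1) set22.
  by case/set2P=> ->.
have hc : c \in [set zeta; eta] by rewrite (eqP h2) set21.
have he : e \in [set zeta; eta] by rewrite (eqP h2) set22.
rewrite !in_arc in hx hy.
case/set2P: hc => ?; case/set2P: he => ?; subst.
- by move: h3; rewrite /= !inE eqxx /= !andbF.
- exact: (arith1 hx hy h4 h5).
- exact: (arith1 hy hx h5 h4).
- by move: h3; rewrite /= !inE eqxx /= !andbF.
Qed.

Lemma nocross2 (eta zeta u v : 'I_n) : u \in arc_set eta zeta -> v \in arc_set eta zeta ->
  ~~ cross [set zeta; eta] [set u; v].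
Proof.
move=> hu hv; apply/negP.
case/existsP=> x /existsP[y /existsP[c /existsP[e /and5P[h1 h2 h3 h4 h5]]]].
have hc : c \in arc_set eta zeta.
  have : c \in [set u; v] by rewrite (eqP h2) set21.
  by case/set2P=> ->.
have he : e \in arc_set eta zeta.
  have : e \in [set u; v] by rewrite (eqP h2) set22.
  by case/set2P=> ->.
have hx : x \in [set zeta; eta] by rewrite (eqP h1) set21.
have hy : y \in [set zeta; eta] by rewrite (eqP h1) set22.
rewrite !in_arc in hc he.
case/set2P: hx => ?; case/set2P: hy => ?; subst.
- exact: (arith3 h4).
- exact: (arith2 hc h4).
- exact: (arith2 he h5).
- exact: (arith3 h4).
Qed.
End S.

Theorem lemma3p5 (K : semifield) (n : nat) (D D2 : {set {set 'I_n}})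
    (zeta eta : 'I_n) (f : {set 'I_n} -> K) :
  (3 <= n)%N ->
  dissection [set: 'I_n] D ->
  D != set0 ->
  [set zeta; eta] \in D ->
  D = [set [set zeta; eta]] :|: D2 ->
  (3 <= #|arc_set eta zeta|)%N ->
  dissection (arc_set eta zeta) D2 ->
  tpath_formula [set: 'I_n] D f ->
  tpath_formula (arc_set eta zeta) D2 f.
Proof.
move=> hn hD hD0 hd HD hA hD2 hf.
set A := arc_set eta zeta.
have D2D : forall e, e \in D2 -> e \in D by move=> e he; rewrite HD in_setU he orbT.
have DD2 : forall e, e \in D -> e = [set zeta; eta] \/ e \in D2.
  by move=> e; rewrite HD in_setU in_set1 => /orP[/eqP|]; [left|right].
have D2A : forall e, e \in D2 -> e \subset A.
  by move=> e he; case/andP: hD2 => /forall_inP/(_ e he)/andP[/andP[]].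
have dA : [set zeta; eta] \subset A by rewrite subUset !sub1set zeta_in eta_in.
have key : forall a b p, a \in A -> b \in A -> tpath setT D a b p = tpath A D2 a b p.
  move=> a b p ha hb; rewrite /tpath.
  apply/idP/idP.
  - move=> /andP[h1 /andP[h2 /andP[h3 /andP[h4 /andP[h5 /andP[h6 /andP[h7 /andP[h8 /andP[h9 h10]]]]]]]]].
    have hpA : all (fun v => v \in A) p.
      apply/allP=> x hx; move/eqP: h1 => E; rewrite E in hx.
      have := vert hx; case=> [->|->|[s hs hxs]] //.
        by move: h2; rewrite E /= => /eqP ->.
      rewrite -E in hs; have := allP h8 s hs; case/DD2 => [Es|hs2].
        by rewrite Es in hxs; exact: (subsetP dA x hxs).
      exact: (subsetP (D2A s hs2) x hxs).
    have hsA : forall s, s \in steps p -> s \subset A.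
      move=> s /steps_mem [u [v [-> hu hv]]].
      by rewrite subUset !sub1set (allP hpA _ hu) (allP hpA _ hv).
    rewrite h1 h2 h3 hpA h6 h9 h10 /=.
    rewrite ?andbT; apply/and3P; split.
    + apply/allP=> s hs; move/allP: h5 => /(_ s hs); by rewrite /is_diag (hsA s hs) subsetT.
    + apply/allP=> s hs; apply/forall_inP=> e he; exact: (forall_inP (allP h7 s hs) e (D2D e he)).
    + apply/allP=> s hs; case: (DD2 s (allP h8 s hs)) => // E; exfalso.
      have := allP h9 s hs; rewrite E.
      by rewrite (negbTE (nocross2 ha hb)).
  - move=> /andP[h1 /andP[h2 /andP[h3 /andP[h4 /andP[h5 /andP[h6 /andP[h7 /andP[h8 /andP[h9 h10]]]]]]]]].
    have hsA : forall s, s \in steps p -> s \subset A.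
      move=> s /steps_mem [u [v [-> hu hv]]].
      by rewrite subUset !sub1set (allP h4 _ hu) (allP h4 _ hv).
    rewrite h1 h2 h3 h6 h9 h10 /=.
    rewrite ?andbT; apply/and4P; split.
    + by apply/allP=> x _; rewrite in_setT.
    + apply/allP=> s hs; move/allP: h5 => /(_ s hs); by rewrite /is_diag (hsA s hs) subsetT.
    + apply/allP=> s hs; apply/forall_inP=> e he; case: (DD2 e he) => [->|he2].
        have [u [v [-> hu hv]]] := steps_mem hs.
        exact: nocross1 (allP h4 _ hu) (allP h4 _ hv).
      exact: (forall_inP (allP h7 s hs) e he2).
    + apply/allP=> s hs; exact: D2D (allP h8 s hs).
move=> a b ha hb hab; have [s us [Hs Hsum]] := hf a b (in_setT a) (in_setT b) hab.
by exists s => //; split => // p; rewrite Hs; exact: key.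
Qed.
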